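(* For $i=1,\dots,n$ let $X_i=\{0,1,\dots,m_i-1\}$ and let $P_i$ be an irreducible stochastic matrix on $X_i$ in detailed balance with a strictly positive probability measure $\sigma_i$. Let $\{1,\dots,n\}=C\sqcup N$ with $N\neq\emptyset$, $i_1=\min N$, $p^0_1,\dots,p^0_n>0$ summing to $1$, and assume $P_k$ is symmetric for every $k>i_1$. Let $P$ be the first crested product (see context). For each $i$ let $U_i$ be a real $m_i\times m_i$ matrix, $\Delta_i$ a real diagonal matrix and $D_i=\mathrm{diag}(\sigma_i(0),\dots,\sigma_i(m_i-1))$ such that $P_iU_i=U_i\Delta_i$, $U_i^TD_iU_i=I$, the column of $U_i$ indexed by $0$ is the all-ones vector and $(\Delta_i)_{00}=1$. Put $M_i=I_i^{\sigma_i\text{-norm}}$ if $i\in N$ and $M_i=U_i$ if $i\in C$, and $$U=\sum_{k=i_1+1}^nM_1\otimes\cdots\otimes M_{k-1}\otimes(U_k-A_k)\otimes A_{k+1}\otimes\cdots\otimes A_n+U_1\otimes\cdots\otimes U_{i_1}\otimes A_{i_1+1}\otimes\cdots\otimes A_n,$$ $$D=\bigotimes_{i=1}^nD_i,\qquad \Delta=\sum_{i\in C}p^0_i(I_1\otimes\cdots\otimes\Delta_i\otimes\cdots\otimes I_n)+\sum_{i\in N}p^0_i(I_1\otimes\cdots\otimes I_{i-1}\otimes\Delta_i\otimes J^{\mathrm{diag}}_{i+1}\otimes\cdots\otimes J^{\mathrm{diag}}_n).$$ Then $D$ is the diagonal matrix of a probability measure in detailed balance with $P$, $\Delta$ is diagonal,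 and $PU=U\Delta$, $U^TDU=I$.
   Context: The first crested product is $P=\sum_{i\in C}p^0_i(I_1\otimes\cdots\otimes I_{i-1}\otimes P_i\otimes I_{i+1}\otimes\cdots\otimes I_n)+\sum_{i\in N}p^0_i(I_1\otimes\cdots\otimes I_{i-1}\otimes P_i\otimes J_{i+1}\otimes\cdots\otimes J_n)$, where $I_i$ is the $m_i\times m_i$ identity and $J_i$ is the $m_i\times m_i$ matrix with all entries $1/m_i$. Kronecker products are indexed lexicographically: $(A\otimes B)_{(x,x'),(y,y')}=A_{x,y}B_{x',y'}$. $I_i^{\sigma_i\text{-norm}}=\mathrm{diag}(\sigma_i(0)^{-1/2},\dots,\sigma_i(m_i-1)^{-1/2})$; $A_i$ is the $m_i\times m_i$ matrix whose column $0$ has all entries $1$ and all other entries $0$; $J^{\mathrm{diag}}_i=\mathrm{diag}(1,0,\dots,0)$ of size $m_i$. Detailed balance: $\sigma_i(x)p_i(x,y)=\sigma_i(y)p_i(y,x)$. *)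

(* Defs.v *)
From HB Require Import structures.
From mathcomp Require Import all_boot all_order all_algebra.
Set Implicit Arguments. Unset Strict Implicit. Unset Printing Implicit Defensive.
Import Order.TTheory GRing.Theory Num.Theory.
Local Open Scope ring_scope.

Definition stochastic (R : numDomainType) (k : nat) (A : 'M[R]_k) : Prop :=
  (forall x y, 0 <= A x y) /\ (forall x, \sum_y A x y = 1).

Definition irreducible (R : numDomainType) (k : nat) (A : 'M[R]_k.+1) : Prop :=
  forall x y, exists t : nat, 0 < (A ^+ t) x y.

Definition detailed_balance (R : numDomainType) (k : nat)
  (s : 'I_k -> R) (A : 'M[R]_k) : Prop :=
  forall x y, s x * A x y = s y * A y x.

(* X_i = {0,...,(m i)} has (m i).+1 elements. *)
Definition prodsp (n : nat) (m : 'I_n -> nat) : finType :=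
  {dffun forall i : 'I_n, 'I_(m i).+1}.

Definition fmat (R : Type) (X : finType) := X -> X -> R.

Definition fmmul (R : pzRingType) (X : finType) (A B : fmat R X) : fmat R X :=
  fun x y => \sum_(z : X) A x z * B z y.
Definition fmtr (R : Type) (X : finType) (A : fmat R X) : fmat R X :=
  fun x y => A y x.
Definition fmid (R : pzRingType) (X : finType) : fmat R X :=
  fun x y => (x == y)%:R.

(* Kronecker product A_1 (x) ... (x) A_n; entry ((x_1..x_n),(y_1..y_n)) is
   prod_i (A_i)_{x_i,y_i}, i.e. the lexicographic Kronecker product up to the
   canonical relabelling of indices. *)
Definition kron (R : pzRingType) (n : nat) (m : 'I_n -> nat)
  (A : forall i : 'I_n, 'M[R]_((m i).+1)) : fmat R (prodsp m) :=
  fun x y => \prod_(i < n) A i (x i) (y i).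

Definition Imx (R : pzRingType) (k : nat) : 'M[R]_k := 1%:M.
Definition Jmx (R : fieldType) (k : nat) : 'M[R]_k := const_mx (k%:R^-1).
Definition Amx (R : pzRingType) (k : nat) : 'M[R]_k.+1 :=
  \matrix_(x, y) (y == ord0)%:R.
Definition Jdiag (R : pzRingType) (k : nat) : 'M[R]_k.+1 :=
  \matrix_(x, y) ((x == ord0) && (y == ord0))%:R.
Definition signorm (R : rcfType) (k : nat) (s : 'I_k -> R) : 'M[R]_k :=
  diag_mx (\row_x (Num.sqrt (s x))^-1).
Definition diagm (R : pzRingType) (k : nat) (s : 'I_k -> R) : 'M[R]_k :=
  diag_mx (\row_x s x).

(* C = complement of N. *)
Definition crested1 (R : fieldType) (n : nat) (m : 'I_n -> nat)
  (N : {set 'I_n}) (p0 : 'I_n -> R) (P : forall i : 'I_n, 'M[R]_((m i).+1))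
  : fmat R (prodsp m) :=
  fun x y =>
    \sum_(i < n | i \notin N)
        p0 i * kron (fun j => if j == i then P j else @Imx R (m j).+1) x y
  + \sum_(i < n | i \in N)
        p0 i * kron (fun j => if (j < i)%N then @Imx R (m j).+1
                              else if j == i then P j else @Jmx R (m j).+1) x y.

Definition crestedDelta (R : pzRingType) (n : nat) (m : 'I_n -> nat)
  (N : {set 'I_n}) (p0 : 'I_n -> R) (Dl : forall i : 'I_n, 'M[R]_((m i).+1))
  : fmat R (prodsp m) :=
  fun x y =>
    \sum_(i < n | i \notin N)
        p0 i * kron (fun j => if j == i then Dl j else @Imx R (m j).+1) x y
  + \sum_(i < n | i \in N)
        p0 i * kron (fun j => if (j < i)%N then @Imx R (m j).+1
                              else if j == i then Dl j else @Jdiag R (m j)) x y.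

Definition Mfac (R : rcfType) (n : nat) (m : 'I_n -> nat)
  (N : {set 'I_n}) (sigma : forall i : 'I_n, 'I_(m i).+1 -> R)
  (U : forall i : 'I_n, 'M[R]_((m i).+1)) (j : 'I_n) : 'M[R]_((m j).+1) :=
  if j \in N then signorm (sigma j) else U j.

Definition crestedU (R : rcfType) (n : nat) (m : 'I_n -> nat)
  (N : {set 'I_n}) (i1 : 'I_n) (sigma : forall i : 'I_n, 'I_(m i).+1 -> R)
  (U : forall i : 'I_n, 'M[R]_((m i).+1)) : fmat R (prodsp m) :=
  fun x y =>
    \sum_(k < n | (i1 < k)%N)
        kron (fun j => if (j < k)%N then Mfac N sigma U j
                       else if j == k then U j - @Amx R (m j) else @Amx R (m j)) x y
  + kron (fun j => if (j <= i1)%N then U j else @Amx R (m j)) x y.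

Definition crestedD (R : pzRingType) (n : nat) (m : 'I_n -> nat)
  (sigma : forall i : 'I_n, 'I_(m i).+1 -> R) : fmat R (prodsp m) :=
  kron (fun i => diagm (sigma i)).

(* Main.v *)
Require Import Defs.
From HB Require Import structures.
From mathcomp Require Import all_boot all_order all_algebra.
From mathcomp Require Import reals.
From mathcomp Require Import ring lra.
From Stdlib Require Import FunctionalExtensionality.
Import Order.TTheory GRing.Theory Num.Theory.
Local Open Scope ring_scope.
Lemma prod_sum_dep (R : comPzRingType) (I : finType) (T : I -> finType)
  (F : forall i, T i -> R) :
  \prod_i \sum_(j : T i) F i j = \sum_(f : {dffun forall i, T i}) \prod_i F i (f i).
Proof.
rewrite (reindex (@dffun_of_fprod I T)) /=; last first.
  by apply/onW_bij/dffun_of_fprod_bij.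
transitivity (\sum_(t : fprod T) \prod_(i in I) [ffun j => F i j] (t i)); last first.
  apply: eq_bigr => t _; apply: eq_bigr => i _; rewrite ffunE /dffun_of_fprod ffunE //.
rewrite big_fprod -(bigA_distr_big_dep _ (fun i j => untag 0 [ffun j => F i j] j)) /=. apply: eq_bigr => i _. rewrite big_tag. apply: eq_bigr => j _. by rewrite /untag; case: eqP => // e; rewrite ffunE. Qed.


Lemma sum_pick0 (R : realType) (k : nat) (f : 'I_k.+1 -> R) :
  \sum_z (z == ord0)%:R * f z = f ord0.
Proof.
rewrite (bigD1 ord0) //= mul1r big1 ?addr0 // => z /negPf ->; by rewrite mul0r.
Qed.

Lemma stoch_A (R : realType) (k : nat) (P : 'M[R]_k.+1) :
  stochastic P -> P *m Amx R k = Amx R k.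
Proof.
move=> [_ Hs]; apply/matrixP=> a b; rewrite !mxE.
under eq_bigr do rewrite mxE.
by rewrite -big_distrl /= Hs mul1r.
Qed.

Lemma A_diag (R : realType) (k : nat) (Dl : 'M[R]_k.+1) :
  is_diag_mx Dl -> Dl ord0 ord0 = 1 -> Amx R k *m Dl = Amx R k.
Proof.
move=> /is_diag_mxP Hd H0; apply/matrixP=> a b; rewrite !mxE.
under eq_bigr do rewrite mxE.
rewrite sum_pick0; case: (eqVneq b ord0) => [->|hb]; first by rewrite H0.
by rewrite Hd // eq_sym.
Qed.

Lemma J_A (R : realType) (k : nat) : Jmx R k.+1 *m Amx R k = Amx R k.
Proof.
apply/matrixP=> a b; rewrite !mxE.
under eq_bigr do rewrite !mxE.
by rewrite -big_distrl /= sumr_const card_ord -[_ *+ k.+1]mulr_natr ?mul1r mulVf ?mul1r // pnatr_eq0.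
Qed.

Lemma A_Jd (R : realType) (k : nat) : Amx R k *m Jdiag R k = Amx R k.
Proof.
apply/matrixP=> a b; rewrite !mxE.
under eq_bigr do rewrite !mxE.
rewrite (bigD1 ord0) //= mul1r big1 ?addr0 //.
by move=> z /negPf ->; rewrite mul0r.
Qed.

Lemma colU (R : realType) (k : nat) (s : 'I_k.+1 -> R) (U : 'M[R]_k.+1) :
  U^T *m diagm s *m U = 1%:M -> (forall x, U x ord0 = 1) ->
  forall b, \sum_z s z * U z b = (b == ord0)%:R.
Proof.
move=> HU H0 b; move/matrixP: HU => /(_ ord0 b).
rewrite !mxE eq_sym => <-; apply: eq_bigr => z _.
by rewrite /diagm mul_mx_diag !mxE H0 mul1r.
Qed.

Lemma J_UA (R : realType) (k : nat) (s : 'I_k.+1 -> R) (U : 'M[R]_k.+1) :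
  (forall x y, s x = s y) -> \sum_x s x = 1 ->
  U^T *m diagm s *m U = 1%:M -> (forall x, U x ord0 = 1) ->
  Jmx R k.+1 *m (U - Amx R k) = 0.
Proof.
move=> Hc Hs HU H0; have Hcol := @colU _ _ _ _ HU H0.
have Hs0 : s ord0 * (k.+1)%:R = 1.
  have HH : \sum_x s x = s ord0 *+ k.+1.
    by rewrite (eq_bigr (fun _ => s ord0)) ?sumr_const ?card_ord // => x _; rewrite (Hc x ord0).
  by rewrite mulr_natr -HH Hs.
apply/matrixP=> a b; rewrite !mxE.
under eq_bigr do rewrite !mxE.
rewrite -big_distrr /= big_split /= sumr_const card_ord.
have -> : \sum_i U i b = (b == ord0)%:R *+ k.+1.
  have E : (k.+1)%:R * (s ord0 * \sum_i U i b) = \sum_i U i b.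
    by rewrite mulrA [_ * s ord0]mulrC Hs0 mul1r.
  rewrite -E mulr_sumr (eq_bigr (fun z => s z * U z b)) ?Hcol; last by move=> z _; rewrite (Hc ord0 z).
  by rewrite mulrC mulr_natr.
by rewrite mulNrn subrr mulr0.
Qed.
Lemma UA_Jd (R : realType) (k : nat) (U : 'M[R]_k.+1) :
  (forall x, U x ord0 = 1) -> (U - Amx R k) *m Jdiag R k = 0.
Proof.
move=> H0; apply/matrixP=> a b; rewrite !mxE.
under eq_bigr do rewrite !mxE.
rewrite (bigD1 ord0) //= big1 ?addr0; last by move=> z /negPf ->; rewrite mulr0.
by rewrite H0 subrr mul0r.
Qed.

Lemma P_UA (R : realType) (k : nat) (P U Dl : 'M[R]_k.+1) :
  stochastic P -> is_diag_mx Dl -> Dl ord0 ord0 = 1 -> P *m U = U *m Dl ->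
  P *m (U - Amx R k) = (U - Amx R k) *m Dl.
Proof.
move=> HP Hd H0 HU; by rewrite mulmxBr mulmxBl HU stoch_A // A_diag.
Qed.

Lemma AtD (R : realType) (k : nat) (s : 'I_k.+1 -> R) (X : 'M[R]_k.+1) :
  (Amx R k)^T *m diagm s *m X = \matrix_(a, b) ((a == ord0)%:R * \sum_z s z * X z b).
Proof.
apply/matrixP=> a b; rewrite !mxE mulr_sumr; apply: eq_bigr => z _.
rewrite /diagm mul_mx_diag !mxE; case: (a == ord0); rewrite ?mul1r ?mul0r //.
Qed.

Lemma XtDA (R : realType) (k : nat) (s : 'I_k.+1 -> R) (X : 'M[R]_k.+1) :
  X^T *m diagm s *m Amx R k = \matrix_(a, b) ((b == ord0)%:R * \sum_z s z * X z a).
Proof.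
apply/matrixP=> a b; rewrite !mxE mulr_sumr; apply: eq_bigr => z _.
rewrite /diagm mul_mx_diag !mxE; case: (b == ord0); rewrite ?mulr1 ?mulr0 ?mul1r ?mul0r //.
by rewrite mulrC.
Qed.

Lemma Ort_AA (R : realType) (k : nat) (s : 'I_k.+1 -> R) :
  \sum_x s x = 1 -> (Amx R k)^T *m diagm s *m Amx R k = Jdiag R k.
Proof.
move=> Hs; rewrite AtD; apply/matrixP=> a b; rewrite !mxE.
under eq_bigr do rewrite mxE.
rewrite -big_distrl /= Hs mul1r.
by case: (a == ord0); case: (b == ord0); rewrite /= ?mulr1 ?mulr0.
Qed.

Lemma Ort_AUA (R : realType) (k : nat) (s : 'I_k.+1 -> R) (U : 'M[R]_k.+1) :
  \sum_x s x = 1 -> U^T *m diagm s *m U = 1%:M -> (forall x, U x ord0 = 1) ->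
  (Amx R k)^T *m diagm s *m (U - Amx R k) = 0.
Proof.
move=> Hs HU H0; have Hcol := @colU _ _ _ _ HU H0.
rewrite AtD; apply/matrixP=> a b; rewrite !mxE.
under eq_bigr do rewrite !mxE.
rewrite (eq_bigr (fun z => s z * U z b - s z * (b == ord0)%:R)); last by move=> z _; rewrite mulrBr.
by rewrite sumrB Hcol -big_distrl /= Hs mul1r subrr mulr0.
Qed.

Lemma Ort_UAA (R : realType) (k : nat) (s : 'I_k.+1 -> R) (U : 'M[R]_k.+1) :
  \sum_x s x = 1 -> U^T *m diagm s *m U = 1%:M -> (forall x, U x ord0 = 1) ->
  (U - Amx R k)^T *m diagm s *m Amx R k = 0.
Proof.
move=> Hs HU H0; have Hcol := @colU _ _ _ _ HU H0.
rewrite XtDA; apply/matrixP=> a b; rewrite !mxE.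
under eq_bigr do rewrite !mxE.
rewrite (eq_bigr (fun z => s z * U z a - s z * (a == ord0)%:R)); last by move=> z _; rewrite mulrBr.
by rewrite sumrB Hcol -big_distrl /= Hs mul1r subrr mulr0.
Qed.

Lemma Ort_UAUA (R : realType) (k : nat) (s : 'I_k.+1 -> R) (U : 'M[R]_k.+1) :
  \sum_x s x = 1 -> U^T *m diagm s *m U = 1%:M -> (forall x, U x ord0 = 1) ->
  (U - Amx R k)^T *m diagm s *m (U - Amx R k) = 1%:M - Jdiag R k.
Proof.
move=> Hs HU H0.
have E : (Amx R k)^T *m diagm s *m U = Jdiag R k.
  have := @Ort_AUA _ _ _ _ Hs HU H0; rewrite mulmxBr => /eqP; rewrite subr_eq0 => /eqP ->.
  exact: Ort_AA.
rewrite mulmxBr Ort_UAA // subr0 linearB /= !mulmxBl HU E //.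
Qed.
Lemma Ort_sig (R : realType) (k : nat) (s : 'I_k.+1 -> R) :
  (forall x, 0 < s x) -> (signorm s)^T *m diagm s *m signorm s = 1%:M.
Proof.
move=> Hp; rewrite /signorm /diagm tr_diag_mx !mulmx_diag.
apply/matrixP=> a b; rewrite !mxE; congr (_ *+ _).
have hs := Hp a; have hq : 0 < Num.sqrt (s a) by rewrite sqrtr_gt0.
have e : s a = Num.sqrt (s a) ^+ 2 by rewrite sqr_sqrtr // ltW.
rewrite [X in _ * X * _]e expr2; field; exact: lt0r_neq0.
Qed.

Lemma unif_sig (R : realType) (k : nat) (s : 'I_k.+1 -> R) (P : 'M[R]_k.+1) :
  detailed_balance s P -> P^T = P -> irreducible P -> forall x y, s x = s y.
Proof.
move=> Hdb Hsym Hirr.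
have Hc : diagm s *m P = P *m diagm s.
  apply/matrixP=> a b; rewrite /diagm mul_diag_mx mul_mx_diag !mxE Hdb.
  have -> : P b a = P^T a b by rewrite mxE.
  by rewrite Hsym mulrC.
have Ht : forall t, diagm s *m P ^+ t = P ^+ t *m diagm s.
  elim=> [|t IH]; first by rewrite expr0 mulmx1 mul1mx.
  by rewrite exprS -mulmxE !mulmxA Hc -!mulmxA IH.
move=> x y; have [t Ht0] := Hirr x y.
move/matrixP: (Ht t) => /(_ x y); rewrite /diagm mul_diag_mx mul_mx_diag !mxE.
rewrite mulrC => /eqP; rewrite -subr_eq0 -mulrBr mulf_eq0 => /orP [|].
  by move/eqP=> h; rewrite h ltxx in Ht0.
by rewrite subr_eq0 => /eqP.
Qed.
Lemma kron0 (R : realType) (n : nat) (m : 'I_n -> nat)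
  (A : forall i : 'I_n, 'M[R]_((m i).+1)) (x y : prodsp m) (j : 'I_n) :
  A j (x j) (y j) = 0 -> kron A x y = 0.
Proof. by move=> H; rewrite /kron (bigD1 j) //= H mul0r. Qed.

Lemma kron_ext (R : realType) (n : nat) (m : 'I_n -> nat)
  (A B : forall i : 'I_n, 'M[R]_((m i).+1)) (x y : prodsp m) :
  (forall i, A i = B i) -> kron A x y = kron B x y.
Proof. by move=> H; apply: eq_bigr => i _; rewrite H. Qed.

Lemma kron_tr (R : realType) (n : nat) (m : 'I_n -> nat)
  (A : forall i : 'I_n, 'M[R]_((m i).+1)) (x y : prodsp m) :
  kron A y x = kron (fun i => (A i)^T) x y.
Proof. by apply: eq_bigr => i _; rewrite mxE. Qed.

Lemma kronB (R : realType) (n : nat) (m : 'I_n -> nat)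
  (F G H : forall i : 'I_n, 'M[R]_((m i).+1)) (k : 'I_n) (x y : prodsp m) :
  kron (fun j => if j == k then F j - G j else H j) x y =
  kron (fun j => if j == k then F j else H j) x y - kron (fun j => if j == k then G j else H j) x y.
Proof.
have E : forall (T : forall i : 'I_n, 'M[R]_((m i).+1)),
  \prod_(j < n | true && (j != k)) (if j == k then T j else H j) (x j) (y j) =
  \prod_(j < n | true && (j != k)) H j (x j) (y j).
  by move=> T; apply: eq_bigr => j /negPf ->.
rewrite /kron (bigD1 k) // [X in _ = X - _](bigD1 k) // [X in _ = _ - X](bigD1 k) //.
cbv beta; rewrite !eqxx !E mxE.
rewrite mxE; exact: mulrBl.
Qed.
Lemma kron_id (R : realType) (n : nat) (m : 'I_n -> nat) (x y : prodsp m) :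
  kron (fun i => Imx R (m i).+1) x y = (x == y)%:R.
Proof.
case: (eqVneq x y) => [->|hne].
  by rewrite /kron big1 // => i _; rewrite /Imx mxE eqxx.
have [j hj] : exists j, x j != y j.
  apply/existsP; rewrite -negb_forall; apply: contra hne => /forallP H.
  by apply/eqP/ffunP => i; apply/eqP/H.
by apply: (@kron0 _ _ _ _ _ _ j); rewrite /Imx mxE (negPf hj).
Qed.

Lemma kron_mul (R : realType) (n : nat) (m : 'I_n -> nat)
  (A B : forall i : 'I_n, 'M[R]_((m i).+1)) (x y : prodsp m) :
  \sum_z kron A x z * kron B z y = kron (fun i => A i *m B i) x y.
Proof.
rewrite /kron; under eq_bigr do rewrite -big_split /=.
symmetry; rewrite (eq_bigr (fun i => \sum_j A i (x i) j * B i j (y i))); last by move=> i _; rewrite mxE.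
rewrite prod_sum_dep; reflexivity.
Qed.

Lemma sum_option (R : realType) (I : finType) (Q : pred I) (F : option I -> R) :
  \sum_(o | if o is Some i then Q i else true) F o = F None + \sum_(i | Q i) F (Some i).
Proof.
rewrite (bigD1 None) //=; congr (_ + _).
rewrite (reindex_omap (@Some I) id) /=; last by case.
by apply: eq_bigl => i; rewrite eqxx !andbT.
Qed.
Definition Pfac (R : realType) (n : nat) (m : 'I_n -> nat) (N : {set 'I_n})
  (P : forall i : 'I_n, 'M[R]_((m i).+1)) (i j : 'I_n) : 'M[R]_((m j).+1) :=
  if i \in N then (if (j < i)%N then Imx R (m j).+1 else if j == i then P j else Jmx R (m j).+1)
  else (if j == i then P j else Imx R (m j).+1).

Definition Dfac (R : realType) (n : nat) (m : 'I_n -> nat) (N : {set 'I_n})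
  (Dl : forall i : 'I_n, 'M[R]_((m i).+1)) (i j : 'I_n) : 'M[R]_((m j).+1) :=
  if i \in N then (if (j < i)%N then Imx R (m j).+1 else if j == i then Dl j else Jdiag R (m j))
  else (if j == i then Dl j else Imx R (m j).+1).

Definition Ufac (R : realType) (n : nat) (m : 'I_n -> nat) (N : {set 'I_n}) (i1 : 'I_n)
  (sigma : forall i : 'I_n, 'I_(m i).+1 -> R)
  (U : forall i : 'I_n, 'M[R]_((m i).+1)) (o : option 'I_n) (j : 'I_n) : 'M[R]_((m j).+1) :=
  match o with
  | Some k => if (j < k)%N then Mfac N sigma U j
              else if j == k then U j - Amx R (m j) else Amx R (m j)
  | None => if (j <= i1)%N then U j else Amx R (m j)
  end.

Definition validU (n : nat) (i1 : 'I_n) (o : option 'I_n) : bool :=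
  if o is Some k then (i1 < k)%N else true.

Arguments Pfac {R n m}.
Arguments Dfac {R n m}.
Arguments Ufac {R n m}.
Arguments validU {n}.

Lemma Pc_eq (R : realType) (n : nat) (m : 'I_n -> nat) (N : {set 'I_n}) (p0 : 'I_n -> R)
  (P : forall i : 'I_n, 'M[R]_((m i).+1)) (x y : prodsp m) :
  crested1 N p0 P x y = \sum_i p0 i * kron (Pfac N P i) x y.
Proof.
rewrite /crested1 [RHS](bigID (fun i => i \notin N)).
congr (_ + _); apply: eq_big => [i|i Hi]; rewrite ?negbK //.
  by congr (_ * _); apply: kron_ext => j; rewrite /Pfac (negPf Hi).
by congr (_ * _); apply: kron_ext => j; rewrite /Pfac Hi.
Qed.

Lemma Dc_eq (R : realType) (n : nat) (m : 'I_n -> nat) (N : {set 'I_n}) (p0 : 'I_n -> R)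
  (Dl : forall i : 'I_n, 'M[R]_((m i).+1)) (x y : prodsp m) :
  crestedDelta N p0 Dl x y = \sum_i p0 i * kron (Dfac N Dl i) x y.
Proof.
rewrite /crestedDelta [RHS](bigID (fun i => i \notin N)).
congr (_ + _); apply: eq_big => [i|i Hi]; rewrite ?negbK //.
  by congr (_ * _); apply: kron_ext => j; rewrite /Dfac (negPf Hi).
by congr (_ * _); apply: kron_ext => j; rewrite /Dfac Hi.
Qed.

Lemma Uc_eq (R : realType) (n : nat) (m : 'I_n -> nat) (N : {set 'I_n}) (i1 : 'I_n)
  (sigma : forall i : 'I_n, 'I_(m i).+1 -> R)
  (U : forall i : 'I_n, 'M[R]_((m i).+1)) (x y : prodsp m) :
  crestedU N i1 sigma U x y = \sum_(o | validU i1 o) kron (Ufac N i1 sigma U o) x y.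
Proof.
rewrite /crestedU /validU sum_option addrC; congr (_ + _).
Qed.
Lemma ord_ltF (n : nat) (a b : 'I_n) : (a < b)%N -> (b < a)%N = false.
Proof. by move=> h; rewrite ltnNge (ltnW h). Qed.

Lemma ord_neqF (n : nat) (a b : 'I_n) : (a < b)%N -> (b == a) = false.
Proof. by move=> h; apply/negP => /eqP E; subst; rewrite ltnn in h. Qed.

Lemma ord_neqF' (n : nat) (a b : 'I_n) : (a < b)%N -> (a == b) = false.
Proof. by move=> h; apply/negP => /eqP E; subst; rewrite ltnn in h. Qed.

Arguments ord_ltF {n a b}.
Arguments ord_neqF {n a b}.
Arguments ord_neqF' {n a b}.

Lemma pair_eig (R : realType) (n : nat) (m : 'I_n -> nat) (N : {set 'I_n}) (i1 : 'I_n)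
  (sigma : forall i : 'I_n, 'I_(m i).+1 -> R)
  (P U Dl : forall i : 'I_n, 'M[R]_((m i).+1)) (i : 'I_n) (o : option 'I_n) (x y : prodsp m) :
  (forall j : 'I_n, j \in N -> (i1 <= j)%N) ->
  (forall j : 'I_n, P j *m U j = U j *m Dl j) ->
  (forall j : 'I_n, P j *m Amx R (m j) = Amx R (m j)) ->
  (forall j : 'I_n, Amx R (m j) *m Dl j = Amx R (m j)) ->
  (forall j : 'I_n, P j *m (U j - Amx R (m j)) = (U j - Amx R (m j)) *m Dl j) ->
  (forall j : 'I_n, (i1 < j)%N -> Jmx R (m j).+1 *m (U j - Amx R (m j)) = 0) ->
  (forall j : 'I_n, (U j - Amx R (m j)) *m Jdiag R (m j) = 0) ->
  validU i1 o ->
  kron (fun j => Pfac N P i j *m Ufac N i1 sigma U o j) x y =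
  kron (fun j => Ufac N i1 sigma U o j *m Dfac N Dl i j) x y.
Proof.
move=> Hi1 HPU HPA HAD HPUA HJUA HUAJ Hv.
have HI : forall (j : 'I_n) (X : 'M[R]_((m j).+1)), Imx R (m j).+1 *m X = X *m Imx R (m j).+1.
  by move=> j X; rewrite /Imx mul1mx mulmx1.
case: o Hv => [k|] /= Hk.
- case HiN : (i \in N); last first.
    apply: kron_ext => j; rewrite /Pfac /Dfac HiN /Ufac.
    case: (eqVneq j i) => [Eji|Hji]; last exact: HI.
    subst j; case: ifP => _; first by rewrite /Mfac HiN HPU.
    by case: ifP => _; [exact: HPUA | rewrite HPA HAD].
  case: (ltnP i k) => Hik.
    rewrite (@kron0 _ _ _ _ _ _ k); last first.
      rewrite /Pfac HiN (ord_ltF Hik) (ord_neqF Hik).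
      by rewrite /Ufac ltnn eqxx HJUA // mxE.
    rewrite (@kron0 _ _ _ _ _ _ k) //.
    rewrite /Dfac HiN (ord_ltF Hik) (ord_neqF Hik).
    by rewrite /Ufac ltnn eqxx HUAJ // mxE.
  apply: kron_ext => j; rewrite /Pfac /Dfac HiN /Ufac.
  case: (ltnP j i) => Hji; first exact: HI.
  case: (eqVneq j i) => [Eji|Hji'].
    subst j; rewrite ltnNge Hik /=; by case: ifP => _; [exact: HPUA | rewrite HPA HAD].
  have Hkj : (k < j)%N by apply: (leq_ltn_trans Hik); rewrite ltn_neqAle eq_sym Hji' Hji.
  rewrite (ord_ltF Hkj) (ord_neqF Hkj).
  by rewrite J_A A_Jd.
- case HiN : (i \in N).
    have Hii := Hi1 i HiN.
    apply: kron_ext => j; rewrite /Pfac /Dfac HiN /Ufac.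
    case: (ltnP j i) => Hji; first exact: HI.
    case: (eqVneq j i) => [Eji|Hji'].
      by subst j; case: ifP => _; [exact: HPU | rewrite HPA HAD].
    have Hkj : (i1 < j)%N by apply: (leq_ltn_trans Hii); rewrite ltn_neqAle eq_sym Hji' Hji.
    by rewrite leqNgt Hkj /= J_A A_Jd.
  apply: kron_ext => j; rewrite /Pfac /Dfac HiN /Ufac.
  case: (eqVneq j i) => [Eji|Hji']; last exact: HI.
  by subst j; case: ifP => _; [exact: HPU | rewrite HPA HAD].
Qed.
Definition Gfac (R : realType) (n : nat) (m : 'I_n -> nat) (i1 : 'I_n)
  (o : option 'I_n) (j : 'I_n) : 'M[R]_((m j).+1) :=
  match o with
  | Some k => if (j < k)%N then 1%:M else if j == k then 1%:M - Jdiag R (m j) else Jdiag R (m j)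
  | None => if (j <= i1)%N then 1%:M else Jdiag R (m j)
  end.
Arguments Gfac {R n m}.

Lemma pair_ort (R : realType) (n : nat) (m : 'I_n -> nat) (N : {set 'I_n}) (i1 : 'I_n)
  (sigma : forall i : 'I_n, 'I_(m i).+1 -> R)
  (U : forall i : 'I_n, 'M[R]_((m i).+1)) (o o' : option 'I_n) (x y : prodsp m) :
  (forall j : 'I_n, (Mfac N sigma U j)^T *m diagm (sigma j) *m Mfac N sigma U j = 1%:M) ->
  (forall j : 'I_n, (U j)^T *m diagm (sigma j) *m U j = 1%:M) ->
  (forall j : 'I_n, (Amx R (m j))^T *m diagm (sigma j) *m Amx R (m j) = Jdiag R (m j)) ->
  (forall j : 'I_n, (Amx R (m j))^T *m diagm (sigma j) *m (U j - Amx R (m j)) = 0) ->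
  (forall j : 'I_n, (U j - Amx R (m j))^T *m diagm (sigma j) *m Amx R (m j) = 0) ->
  (forall j : 'I_n, (U j - Amx R (m j))^T *m diagm (sigma j) *m (U j - Amx R (m j))
      = 1%:M - Jdiag R (m j)) ->
  validU i1 o -> validU i1 o' ->
  kron (fun j => (Ufac N i1 sigma U o j)^T *m diagm (sigma j) *m Ufac N i1 sigma U o' j) x y
  = if o == o' then kron (Gfac i1 o) x y else 0.
Proof.
move=> HOM HOU HOA HOAUA HOUAA HOUAUA.
case: o => [k|] /= Hk; case: o' => [l|] /= Hl.
- case: (eqVneq k l) => [Ekl|Hkl].
    subst l; rewrite eqxx; apply: kron_ext => j; rewrite /Ufac /Gfac.
    case: (ltnP j k) => Hjk; first exact: HOM.
    case: (eqVneq j k) => [Ejk|Hjk']; first by subst j.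
    exact: HOA.
  have -> : (Some k == Some l) = false.
    by apply/negP => /eqP [] E; rewrite E eqxx in Hkl.
  case: (ltnP k l) => Hkl'.
    apply: (@kron0 _ _ _ _ _ _ l).
    by rewrite /Ufac (ord_ltF Hkl') (ord_neqF Hkl') ltnn eqxx HOAUA mxE.
  have Hlk : (l < k)%N by rewrite ltn_neqAle Hkl' andbT; apply: contra Hkl => /eqP E; apply/eqP/val_inj.
  apply: (@kron0 _ _ _ _ _ _ k).
  by rewrite /Ufac (ord_ltF Hlk) (ord_neqF Hlk) ltnn eqxx HOUAA mxE.
- apply: (@kron0 _ _ _ _ _ _ k).
  by rewrite /Ufac ltnn eqxx leqNgt Hk HOUAA mxE.
- apply: (@kron0 _ _ _ _ _ _ l).
  by rewrite /Ufac ltnn eqxx leqNgt Hl HOAUA mxE.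
- apply: kron_ext => j; rewrite /Ufac /Gfac.
  case: ifP => _; [exact: HOU | exact: HOA].
Qed.
Lemma tele (R : realType) (n : nat) (m : 'I_n -> nat) (i1 : 'I_n) (x y : prodsp m) :
  \sum_(o | validU i1 o) kron (@Gfac R n m i1 o) x y = (x == y)%:R.
Proof.
pose FF := fun t : nat => kron (fun j : 'I_n => if (j < t)%N then 1%:M else Jdiag R (m j)) x y.
have HN : kron (@Gfac R n m i1 None) x y = FF i1.+1 by [].
have HS : forall k : 'I_n, kron (@Gfac R n m i1 (Some k)) x y = FF k.+1 - FF k.
  move=> k.
  rewrite (@kron_ext _ _ _ _ (fun j => if j == k then 1%:M - Jdiag R (m j)
              else (if (j < k)%N then 1%:M else Jdiag R (m j)))); last first.
    move=> j; rewrite /Gfac; case: (ltnP j k) => H; first by rewrite (ord_neqF' H).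
    by case: (eqVneq j k).
  rewrite kronB /FF; congr (_ - _); apply: kron_ext => j.
    case: (ltngtP j k) => H.
    - by rewrite (ord_neqF' H) ltnS ltnW.
    - by rewrite (ord_neqF H) ltnS leqNgt H.
    - have E : j = k by apply: val_inj.
      by subst j; rewrite ?eqxx ?ltnSn.
  case: (eqVneq j k) => [->|]; by rewrite ?ltnn.
have Hn : FF n = (x == y)%:R.
  rewrite -kron_id /FF; apply: kron_ext => j; by rewrite ltn_ord.
rewrite /validU sum_option HN (eq_bigr (fun k : 'I_n => FF k.+1 - FF k)); last by move=> k _; rewrite HS.
rewrite -(big_mkord (fun k => (i1 < k)%N) (fun k => FF k.+1 - FF k)).
rewrite (@big_cat_nat _ _ _ i1.+1) //.
rewrite [X in _ + (X + _)]big_nat_cond big1; last first.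
  by move=> k /andP [/andP [_ h1] h2]; rewrite ltnS leqNgt h2 in h1.
rewrite add0r [X in _ + X]big_nat_cond (eq_bigl (fun i => (i1.+1 <= i < n)%N && true)); last first.
  by move=> i /=; case: (i1 < i)%N; case: (i < n)%N.
rewrite -big_nat_cond telescope_sumr; last exact: ltn_ord.
by rewrite addrC subrK Hn.
Qed.
Lemma bil (R : realType) (X I J : finType) (PI : pred I) (PJ : pred J)
  (a : I -> X -> R) (b : J -> X -> R) :
  \sum_z (\sum_(i | PI i) a i z) * (\sum_(j | PJ j) b j z) =
  \sum_(i | PI i) \sum_(j | PJ j) \sum_z a i z * b j z.
Proof.
under eq_bigr do rewrite big_distrlr.
rewrite exchange_big; apply: eq_bigr => i _; by rewrite exchange_big.
Qed.

Lemma exists_neq (n : nat) (m : 'I_n -> nat) (x y : prodsp m) :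
  x != y -> exists j, x j != y j.
Proof.
move=> hne; apply/existsP; rewrite -negb_forall; apply: contra hne => /forallP H.
by apply/eqP/ffunP => i; apply/eqP/H.
Qed.

Theorem proposition4p5 (R : realType) (n : nat) (m : 'I_n -> nat)
  (P : forall i : 'I_n, 'M[R]_((m i).+1))
  (sigma : forall i : 'I_n, 'I_(m i).+1 -> R)
  (N : {set 'I_n}) (i1 : 'I_n) (p0 : 'I_n -> R)
  (U Dl : forall i : 'I_n, 'M[R]_((m i).+1)) :
  (forall i, stochastic (P i)) ->
  (forall i, irreducible (P i)) ->
  (forall i x, 0 < sigma i x) ->
  (forall i, \sum_x sigma i x = 1) ->
  (forall i, detailed_balance (sigma i) (P i)) ->
  i1 \in N -> (forall j, j \in N -> (i1 <= j)%N) ->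
  (forall i, 0 < p0 i) -> \sum_i p0 i = 1 ->
  (forall k : 'I_n, (i1 < k)%N -> (P k)^T = P k) ->
  (forall i, is_diag_mx (Dl i)) ->
  (forall i, P i *m U i = U i *m Dl i) ->
  (forall i, (U i)^T *m diagm (sigma i) *m U i = 1%:M) ->
  (forall i x, U i x ord0 = 1) ->
  (forall i, Dl i ord0 ord0 = 1) ->
  let Pc := crested1 N p0 P in
  let Uc := crestedU N i1 sigma U in
  let Dc := crestedD sigma in
  let Deltac := crestedDelta N p0 Dl in
  ((* D is the diagonal matrix of a probability measure ... *)
      (forall x y, x != y -> Dc x y = 0) /\
      (forall x, 0 <= Dc x x) /\
      \sum_x Dc x x = 1 /\
      (* ... in detailed balance with P *)
      (forall x y, Dc x x * Pc x y = Dc y y * Pc y x) /\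
      (* Delta is diagonal *)
      (forall x y, x != y -> Deltac x y = 0) /\
      fmmul Pc Uc = fmmul Uc Deltac /\
      fmmul (fmmul (fmtr Uc) Dc) Uc = @fmid R (prodsp m)).
Proof.
move=> Hst Hirr Hpos Hsum Hdb Hi1N Hi1 Hp0 Hp0s Hsym Hdiag HPU HUDU HU0 HDl0 Pc Uc Dc Deltac.
have Hunif : forall k : 'I_n, (i1 < k)%N -> forall a b, sigma k a = sigma k b.
  by move=> k hk; exact: (@unif_sig _ _ _ _ (Hdb k) (Hsym k hk) (Hirr k)).
have HDxx : forall x, Dc x x = \prod_i sigma i (x i).
  by move=> x; apply: eq_bigr => i _; rewrite /diagm !mxE eqxx mulr1n.
split.
  move=> x y /exists_neq [j hj]; apply: (@kron0 _ _ _ _ _ _ j).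
  by rewrite /diagm !mxE (negPf hj) mulr0n.
split.
  by move=> x; rewrite HDxx; apply: prodr_ge0 => i _; apply: ltW.
split.
  rewrite (eq_bigr (fun x : prodsp m => \prod_i sigma i (x i))); last by move=> x _; rewrite HDxx.
  transitivity (\prod_i \sum_j sigma i j); first by rewrite prod_sum_dep; reflexivity.
  by apply: big1 => i _.
split.
  move=> x y; rewrite /Pc !Pc_eq !mulr_sumr; apply: eq_bigr => i _.
  rewrite mulrCA [in RHS]mulrCA; congr (_ * _).
  rewrite !HDxx /kron -!big_split; apply: eq_bigr => j _ /=.
  rewrite /Pfac; case HiN : (i \in N).
    case: (ltnP j i) => hji.
      by rewrite /Imx !mxE eq_sym; case: eqP => [->|_]; rewrite ?mulr0n ?mulr0.
    case: (eqVneq j i) => [Eji|hne]; first by subst j; exact: Hdb.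
    have hij : (i < j)%N by rewrite ltn_neqAle hji andbT eq_sym.
    have hj := leq_ltn_trans (Hi1 i HiN) hij.
    by rewrite /Jmx !mxE (Hunif j hj (x j) (y j)).
  case: (eqVneq j i) => [Eji|hne]; first by subst j; exact: Hdb.
  by rewrite /Imx !mxE eq_sym; case: eqP => [->|_]; rewrite ?mulr0n ?mulr0.
split.
  have HJd : forall (j : 'I_n) (a b : 'I_(m j).+1), a != b -> Jdiag R (m j) a b = 0.
    move=> j a b hab; rewrite mxE; case: eqP => [ea|]; case: eqP => [eb|] //.
    by rewrite ea eb eqxx in hab.
  have HId : forall (j : 'I_n) (a b : 'I_(m j).+1), a != b -> Imx R (m j).+1 a b = 0.
    by move=> j a b hab; rewrite /Imx mxE (negPf hab).
  move=> x y /exists_neq [j hj]; rewrite /Deltac Dc_eq; apply: big1 => i _.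
  rewrite (@kron0 _ _ _ _ _ _ j) ?mulr0 //.
  rewrite /Dfac; case: (i \in N).
    case: ltnP => _; first exact: HId.
    case: eqVneq => [E|_]; last exact: HJd.
    by subst j; move/is_diag_mxP: (Hdiag i); apply.
  case: eqVneq => [E|_]; last exact: HId.
  by subst j; move/is_diag_mxP: (Hdiag i); apply.
split.
  apply: functional_extensionality => x; apply: functional_extensionality => y.
  rewrite /fmmul.
  rewrite (eq_bigr (fun z => (\sum_i p0 i * kron (Pfac N P i) x z) *
     (\sum_(o | validU i1 o) kron (Ufac N i1 sigma U o) z y))); last first.
    by move=> z _; rewrite /Pc /Uc Pc_eq Uc_eq.
  rewrite [RHS](eq_bigr (fun z => (\sum_(o | validU i1 o) kron (Ufac N i1 sigma U o) x z) *
     (\sum_i p0 i * kron (Dfac N Dl i) z y))); last first.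
    by move=> z _; rewrite /Deltac /Uc Dc_eq Uc_eq.
  rewrite !bil [RHS]exchange_big; apply: eq_bigr => i _; apply: eq_bigr => o Ho.
  under eq_bigr do rewrite -mulrA.
  rewrite -mulr_sumr kron_mul.
  under [RHS]eq_bigr do rewrite mulrCA.
  rewrite -mulr_sumr kron_mul; congr (_ * _).
  apply: pair_eig => //.
  - by move=> j; exact: (@stoch_A _ _ _ (Hst j)).
  - by move=> j; exact: (@A_diag _ _ _ (Hdiag j) (HDl0 j)).
  - by move=> j; exact: (@P_UA _ _ _ _ _ (Hst j) (Hdiag j) (HDl0 j) (HPU j)).
  - by move=> j hj; exact: (@J_UA _ _ _ _ (Hunif j hj) (Hsum j) (HUDU j) (HU0 j)).
  - by move=> j; exact: (@UA_Jd _ _ _ (HU0 j)).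
apply: functional_extensionality => x; apply: functional_extensionality => y.
rewrite /fmmul /fmtr /fmid.
have Hin : forall z, \sum_w Uc w x * Dc w z =
    \sum_(o | validU i1 o) kron (fun j => (Ufac N i1 sigma U o j)^T *m diagm (sigma j)) x z.
  move=> z; under eq_bigr do rewrite /Uc Uc_eq big_distrl.
  rewrite /= exchange_big; apply: eq_bigr => o _.
  under eq_bigr do rewrite kron_tr.
  rewrite /Dc /crestedD; exact: kron_mul.
rewrite (eq_bigr (fun z => (\sum_(o | validU i1 o) kron (fun j => (Ufac N i1 sigma U o j)^T *m diagm (sigma j)) x z) *
     (\sum_(o | validU i1 o) kron (Ufac N i1 sigma U o) z y))); last first.
  by move=> z _; rewrite Hin /Uc Uc_eq.
rewrite bil -(@tele R n m i1 x y); apply: eq_bigr => o Ho.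
rewrite (eq_bigr (fun o' => if o == o' then kron (Gfac i1 o) x y else 0)); last first.
  move=> o' Ho'; rewrite kron_mul (@pair_ort _ _ _ N i1 sigma U o o' x y) //.
  - by move=> j; rewrite /Mfac; case: ifP => _; [exact: (@Ort_sig _ _ _ (Hpos j)) | exact: HUDU].
  - by move=> j; exact: (@Ort_AA _ _ _ (Hsum j)).
  - by move=> j; exact: (@Ort_AUA _ _ _ _ (Hsum j) (HUDU j) (HU0 j)).
  - by move=> j; exact: (@Ort_UAA _ _ _ _ (Hsum j) (HUDU j) (HU0 j)).
  - by move=> j; exact: (@Ort_UAUA _ _ _ _ (Hsum j) (HUDU j) (HU0 j)).
rewrite (bigD1 o) //= ?eqxx big1 ?addr0 // => o' /andP [_ h].
by rewrite eq_sym (negPf h).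
Qed.
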